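(* For every elementary cellular automaton rule $\alpha\in\{0,\dots,255\}$, every $n\ge1$, every $\Delta,\Delta'\in\mathcal{P}_n$ and every $i\in\mathbb{Z}_n$: if $d^{\leftarrow}_\Delta(i)=d^{\leftarrow}_{\Delta'}(i)$ and $d^{\rightarrow}_\Delta(i)=d^{\rightarrow}_{\Delta'}(i)$, then $f^{(\Delta)}_{\alpha,n}(x)_i=f^{(\Delta')}_{\alpha,n}(x)_i$ for every $x\in\{0,1\}^n$.
   Context: Cells are indexed by $\mathbb{Z}_n=\{0,\dots,n-1\}$, indices modulo $n$. For a Wolfram number $\alpha$, $r_\alpha(x_1,x_2,x_3)$ is the bit of $\alpha$ of weight $2^{4x_1+2x_2+x_3}$, and $f_{\alpha,n}(x)_i=r_\alpha(x_{i-1},x_i,x_{i+1})$. An update schedule is an ordered partition $\Delta=(\Delta_1,\dots,\Delta_k)$ of $\mathbb{Z}_n$ into nonempty blocks; $\mathcal{P}_n$ is the set of them. For a block $B$ let $f^{(B)}(x)_i=f_{\alpha,n}(x)_i$ if $i\in B$ and $x_i$ otherwise; $f^{(\Delta)}_{\alpha,n}=f^{(\Delta_k)}\circ\cdots\circ f^{(\Delta_1)}$. For $u,v\in\mathbb{Z}_n$ with $u\in\Delta_a$, $v\in\Delta_b$, the label is $lab_\Delta((u,v))=\oplus$ if $b\le a$ and $lab_\Delta((u,v))=\ominus$ if $a<b$. Define $d^{\leftarrow}_\Delta(i)=\max\{k\in\mathbb{N}:\forall j\in\mathbb{N},\,0<j<k\Rightarrow lab_\Delta((i-j,i-j+1))=\ominus\}$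 and $d^{\rightarrow}_\Delta(i)=\max\{k\in\mathbb{N}:\forall j\in\mathbb{N},\,0<j<k\Rightarrow lab_\Delta((i+j,i+j-1))=\ominus\}$ (these maxima are finite). *)

(* Defs.v *)
From mathcomp Require Import all_boot.
Set Implicit Arguments. Unset Strict Implicit. Unset Printing Implicit Defensive.

(* Cells are 'I_n; i-1 and i+1 (mod n) are ord_pred i and ordS i. *)
Definition cell_sub n (i : 'I_n) (j : nat) : 'I_n := iter j (@ord_pred n) i.
Definition cell_add n (i : 'I_n) (j : nat) : 'I_n := iter j (@ordS n) i.

Definition rule (alpha : nat) (x1 x2 x3 : bool) : bool :=
  odd (alpha %/ 2 ^ (4 * x1 + 2 * x2 + x3)).

Definition eca n (alpha : nat) (x : 'I_n -> bool) (i : 'I_n) : bool :=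
  rule alpha (x (ord_pred i)) (x i) (x (ordS i)).

Definition block_update n (alpha : nat) (B : {set 'I_n}) (x : 'I_n -> bool)
  : 'I_n -> bool :=
  fun i => if i \in B then eca alpha x i else x i.

(* An update schedule: ordered partition (Delta_1,...,Delta_k) of Z_n into
   nonempty blocks, represented as the sequence of its blocks in order. *)
Definition is_schedule n (D : seq {set 'I_n}) : Prop :=
  [/\ all (fun B => B != set0) D,
      pairwise (fun A B : {set 'I_n} => [disjoint A & B]) D
    & \bigcup_(B <- D) B = [set: 'I_n]].

Definition schedule_update n (alpha : nat) (D : seq {set 'I_n})
  (x : 'I_n -> bool) : 'I_n -> bool :=
  foldl (fun y B => block_update alpha B y) x D.

Definition block_index n (D : seq {set 'I_n}) (u : 'I_n) : nat :=
  find (fun B : {set 'I_n} => u \in B) D.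

(* lab_Delta((u,v)) = minus  iff  a < b, where u in Delta_a, v in Delta_b. *)
Definition lab_minus n (D : seq {set 'I_n}) (u v : 'I_n) : bool :=
  block_index D u < block_index D v.

Definition dleft_cond n (D : seq {set 'I_n}) (i : 'I_n) (k : nat) : Prop :=
  forall j, 0 < j < k -> lab_minus D (cell_sub i j) (cell_sub i j.-1).
Definition is_dleft n (D : seq {set 'I_n}) (i : 'I_n) (d : nat) : Prop :=
  dleft_cond D i d /\ forall k, dleft_cond D i k -> k <= d.

Definition dright_cond n (D : seq {set 'I_n}) (i : 'I_n) (k : nat) : Prop :=
  forall j, 0 < j < k -> lab_minus D (cell_add i j) (cell_add i j.-1).
Definition is_dright n (D : seq {set 'I_n}) (i : 'I_n) (d : nat) : Prop :=
  dright_cond D i d /\ forall k, dright_cond D i k -> k <= d.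

(* Main.v *)
Require Import Defs.
From mathcomp Require Import all_boot.
From mathcomp Require Import zify.
Set Implicit Arguments. Unset Strict Implicit. Unset Printing Implicit Defensive.

Definition Sst n alpha (D : seq {set 'I_n}) (x : 'I_n -> bool) t :=
  foldl (fun y B => block_update alpha B y) x (take t D).

Lemma S_succ n alpha (D : seq {set 'I_n}) x t c :
  Sst alpha D x t.+1 c =
  if (t < size D) && (c \in nth set0 D t) then eca alpha (Sst alpha D x t) c
  else Sst alpha D x t c.
Proof.
case: ltnP => Ht /=.
  by rewrite /Sst (take_nth set0 Ht) foldl_rcons /block_update.
by rewrite /Sst !take_oversize //; apply: leqW.
Qed.

Lemma SA n alpha (D : seq {set 'I_n}) x c t :
  t <= block_index D c -> Sst alpha D x t c = x c.
Proof.
elim: t => [|t IH] Ht; first by rewrite /Sst take0.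
rewrite S_succ.
have -> : (c \in nth set0 D t) = false.
  exact: (before_find set0 (a := fun B : {set 'I_n} => c \in B) Ht).
by rewrite andbF IH // ltnW.
Qed.

Lemma SB n alpha (D : seq {set 'I_n}) x c :
  pairwise (fun A B : {set 'I_n} => [disjoint A & B]) D ->
  block_index D c < size D -> forall t, block_index D c < t ->
  Sst alpha D x t c = eca alpha (Sst alpha D x (block_index D c)) c.
Proof.
move=> Hpw Hb; elim=> [|t IH] Ht; first by [].
rewrite S_succ.
have Hin : c \in nth set0 D (block_index D c).
  apply: (nth_find set0 (a := fun B : {set 'I_n} => c \in B)).
  by rewrite has_find.
case: (ltngtP (block_index D c) t) => Hct.
- rewrite IH //.
  case Hts: (t < size D) => //=.
  move/pairwiseP: Hpw => /(_ set0 (block_index D c) t Hb Hts Hct) Hd.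
  by rewrite (disjointFr Hd Hin).
- lia.
- by rewrite -Hct Hb Hin.
Qed.

Fixpoint lchain n alpha (x : 'I_n -> bool) k c :=
  match k with 0 => x c
  | k'.+1 => rule alpha (lchain alpha x k' (ord_pred c)) (x c) (x (ordS c)) end.

Fixpoint rchain n alpha (x : 'I_n -> bool) k c :=
  match k with 0 => x c
  | k'.+1 => rule alpha (x (ord_pred c)) (x c) (rchain alpha x k' (ordS c)) end.

Lemma left_chain n alpha (D : seq {set 'I_n}) x :
  pairwise (fun A B : {set 'I_n} => [disjoint A & B]) D ->
  forall k c,
  (forall j, j < k -> block_index D (iter j.+1 (@ord_pred n) c)
                      < block_index D (iter j (@ord_pred n) c)) ->
  ~~ (block_index D (iter k.+1 (@ord_pred n) c) < block_index D (iter k (@ord_pred n) c)) ->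
  block_index D c <= size D ->
  Sst alpha D x (block_index D c) (ord_pred c) = lchain alpha x k (ord_pred c).
Proof.
move=> Hpw; elim=> [|k IH] c H1 H2 Hs.
  by rewrite /= SA //; rewrite -leqNgt in H2.
have H0 := H1 0 isT; rewrite /= in H0.
rewrite (SB _ _ Hpw) //; last by apply: leq_trans H0 Hs.
rewrite /eca /= (SA alpha x (leqnn _)) ord_predK (SA alpha x (ltnW H0)).
rewrite IH //.
- move=> j Hj; rewrite -!iterSr; exact: H1.
- by rewrite -!iterSr.
- by apply: ltnW; apply: leq_trans H0 Hs.
Qed.

Lemma right_chain n alpha (D : seq {set 'I_n}) x :
  pairwise (fun A B : {set 'I_n} => [disjoint A & B]) D ->
  forall k c,
  (forall j, j < k -> block_index D (iter j.+1 (@ordS n) c)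
                      < block_index D (iter j (@ordS n) c)) ->
  ~~ (block_index D (iter k.+1 (@ordS n) c) < block_index D (iter k (@ordS n) c)) ->
  block_index D c <= size D ->
  Sst alpha D x (block_index D c) (ordS c) = rchain alpha x k (ordS c).
Proof.
move=> Hpw; elim=> [|k IH] c H1 H2 Hs.
  by rewrite /= SA //; rewrite -leqNgt in H2.
have H0 := H1 0 isT; rewrite /= in H0.
rewrite (SB _ _ Hpw) //; last by apply: leq_trans H0 Hs.
rewrite /eca /= (SA alpha x (leqnn _)) ordSK (SA alpha x (ltnW H0)).
rewrite IH //.
- move=> j Hj; rewrite -!iterSr; exact: H1.
- by rewrite -!iterSr.
- by apply: ltnW; apply: leq_trans H0 Hs.
Qed.

Lemma cover_has n (D : seq {set 'I_n}) c :
  c \in \bigcup_(B <- D) B -> has (fun B : {set 'I_n} => c \in B) D.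
Proof.
elim: D => [|B D IH]; first by rewrite big_nil inE.
by rewrite big_cons inE /= => /orP [->|/IH ->] //; rewrite orbT.
Qed.

Lemma value n alpha (D : seq {set 'I_n}) i dl dr x :
  is_schedule D -> is_dleft D i dl -> is_dright D i dr ->
  schedule_update alpha D x i =
  rule alpha (lchain alpha x dl.-1 (ord_pred i)) (x i) (rchain alpha x dr.-1 (ordS i)).
Proof.
case=> _ Hpw Hcov [Hl Hlm] [Hr Hrm].
have Hi : block_index D i < size D.
  by rewrite /block_index -has_find; apply: cover_has; rewrite Hcov inE.
have Hl1 : 1 <= dl by apply: Hlm => j; lia.
have Hr1 : 1 <= dr by apply: Hrm => j; lia.
have -> : schedule_update alpha D x = Sst alpha D x (size D)
  by rewrite /Sst take_size.
rewrite (SB _ _ Hpw Hi Hi) /eca (SA alpha x (leqnn _)).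
rewrite (left_chain _ _ Hpw (k := dl.-1)) ?(right_chain _ _ Hpw (k := dr.-1)) //; try exact: ltnW.
- move=> j Hj; have := Hr j.+1; rewrite /lab_minus /cell_add /=; apply; lia.
- apply/negP => Hc.
  have : dright_cond D i dr.+1.
    move=> j Hj; case: (ltngtP j dr) => Hjd.
    + by apply: Hr; lia.
    + lia.
    + by rewrite /lab_minus /cell_add Hjd -(ltn_predK Hr1).
  by move/Hrm; rewrite ltnn.
- move=> j Hj; have := Hl j.+1; rewrite /lab_minus /cell_sub /=; apply; lia.
- apply/negP => Hc.
  have : dleft_cond D i dl.+1.
    move=> j Hj; case: (ltngtP j dl) => Hjd.
    + by apply: Hl; lia.
    + lia.
    + by rewrite /lab_minus /cell_sub Hjd -(ltn_predK Hl1).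
  by move/Hlm; rewrite ltnn.
Qed.

Theorem mainTheorem10 (alpha n : nat) (D D' : seq {set 'I_n}) (i : 'I_n) :
  alpha <= 255 -> 0 < n ->
  is_schedule D -> is_schedule D' ->
  (exists dl, is_dleft D i dl /\ is_dleft D' i dl) ->
  (exists dr, is_dright D i dr /\ is_dright D' i dr) ->
  forall x : 'I_n -> bool,
    schedule_update alpha D x i = schedule_update alpha D' x i.
Proof.
move=> _ _ HD HD' [dl [Hl Hl']] [dr [Hr Hr']] x.
by rewrite (value _ _ HD Hl Hr) (value _ _ HD' Hl' Hr').
Qed.
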